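(* Let $G=([n],E)$ be a persistent graph and let $a,b,c$ be vertices such that $b<c$, $\{b,c\} \subseteq N(a)$, and there is no vertex $x \in N[a]$ with $b < x < c$. Then $\{b,c\} \in E$.
   Context: $[n]=\{1,\dots,n\}$. A graph $G=([n],E)$ is persistent if (1) it contains the Hamilton path $1,2,\dots,n$, i.e. $\{i,i+1\}\in E$ for all $1\le i<n$; (2) (X-property) if $\{a,c\}\in E$ and $\{b,d\}\in E$ for vertices $a<b<c<d$, then $\{a,d\}\in E$; (3) (bar-property) for every edge $\{a,b\}\in E$ with $a<b-1$ there is a vertex $x$ with $a<x<b$ such that $\{a,x\}\in E$ and $\{x,b\}\in E$. $N(v)$ denotes the set of neighbors of $v$ and $N[v]=N(v)\cup\{v\}$. *)

(* Defs.v *)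
From mathcomp Require Import all_boot.
Set Implicit Arguments. Unset Strict Implicit. Unset Printing Implicit Defensive.

Definition in_vset (n v : nat) : bool := (1 <= v) && (v <= n).

Definition simple_graph_on (n : nat) (E : rel nat) : Prop :=
  (forall u v, E u v = E v u) /\
  (forall v, ~~ E v v) /\
  (forall u v, E u v -> in_vset n u && in_vset n v).

Definition persistent (n : nat) (E : rel nat) : Prop :=
  simple_graph_on n E /\
  (forall i, 1 <= i -> i < n -> E i i.+1) /\
  (forall a b c d, a < b -> b < c -> c < d -> E a c -> E b d -> E a d) /\
  (forall a b, a < b.-1 -> E a b -> exists x, [/\ a < x, x < b, E a x & E x b]).

Definition closed_nbhd (E : rel nat) (v x : nat) : bool := (x == v) || E v x.

(* Main.v *)
Require Import Defs.
From mathcomp Require Import all_boot.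
From mathcomp Require Import zify.

Lemma up_case (n : nat) (E : rel nat) (a b c : nat) :
  persistent n E -> a < b -> b < c -> E a b -> E a c ->
  (forall x, in_vset n x -> closed_nbhd E a x -> ~~ ((b < x) && (x < c))) ->
  E b c.
Proof.
move=> [[Hsym [Hirr Hin]] [Hham [HX Hbar]]] ab bc Eab Eac H.
suff: forall k y, b - y = k -> a <= y <= b -> E y c -> E b c.
  by move=> /(_ _ a erefl); apply; [lia|].
elim/ltn_ind=> k IH y Hk /andP[ay yb] Eyc.
have [ey|ney] := eqVneq y b; first by rewrite -ey.
have yc : y < c.-1 by lia.
have [z [yz zc Eyz Ezc]] := Hbar _ _ yc Eyc.
have [zb|bz] := leqP z b.
  apply: (IH (b - z) _ z erefl _ Ezc); [lia | apply/andP; split; lia].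
exfalso.
have Eaz : E a z.
  have [ea|nea] := eqVneq a y; first by rewrite ea.
  apply: (HX a y b z) => //; lia.
have := H z _ _.
have /andP[_ ->] := Hin _ _ Eaz.
rewrite /closed_nbhd Eaz orbT bz zc /=.
by move=> /(_ isT isT).
Qed.

Lemma down_case (n : nat) (E : rel nat) (a b c : nat) :
  persistent n E -> b < c -> c < a -> E a b -> E a c ->
  (forall x, in_vset n x -> closed_nbhd E a x -> ~~ ((b < x) && (x < c))) ->
  E b c.
Proof.
move=> [[Hsym [Hirr Hin]] [Hham [HX Hbar]]] bc ca Eab Eac H.
suff: forall k y, y - c = k -> c <= y <= a -> E b y -> E b c.
  by move=> /(_ _ a erefl); apply; [lia| rewrite Hsym].
elim/ltn_ind=> k IH y Hk /andP[cy ya] Eby.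
have [ey|ney] := eqVneq y c; first by rewrite -ey.
have by' : b < y.-1 by lia.
have [z [bz zy Ebz Ezy]] := Hbar _ _ by' Eby.
have [cz|zc] := leqP c z.
  apply: (IH (z - c) _ z erefl _ Ebz); [lia | apply/andP; split; lia].
exfalso.
have Eaz : E a z.
  have [ea|nea] := eqVneq a y; first by rewrite ea Hsym.
  rewrite Hsym; apply: (HX z c y a) => //; [lia|lia|by rewrite Hsym].
have := H z _ _.
have /andP[_ ->] := Hin _ _ Eaz.
rewrite /closed_nbhd Eaz orbT bz zc /=.
by move=> /(_ isT isT).
Qed.

Theorem lemma5 (n : nat) (E : rel nat) (a b c : nat) :
  persistent n E ->
  in_vset n a -> in_vset n b -> in_vset n c ->
  b < c -> E a b -> E a c ->
  (forall x, in_vset n x -> closed_nbhd E a x -> ~~ ((b < x) && (x < c))) ->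
  E b c.
Proof.
move=> HP Ha Hb Hc bc Eab Eac H.
have [[_ [Hirr _]] _] := HP.
have [ab|ba] := ltnP a b; first exact: (@up_case n E a b c HP ab bc Eab Eac H).
have [ca|ac] := ltnP c a; first exact: (@down_case n E a b c HP bc ca Eab Eac H).
exfalso.
have [eab|nab] := eqVneq a b; first by move: (Hirr a); rewrite {2}eab Eab.
have [eac|nac] := eqVneq a c; first by move: (Hirr a); rewrite {2}eac Eac.
have := H a Ha; rewrite /closed_nbhd eqxx /=.
have -> : (b < a) && (a < c) by apply/andP; split; lia.
by move=> /(_ isT).
Qed.
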